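(* There exists a constant $M$ such that for every $n \ge 1$ and every non-zero polynomial $f(z) = \sum_{i=0}^n a_i z^i$ with $a_i \in \{-1,0,1\}$ for all $0\le i\le n$, the number of $z\in\mathbb{C}$ with $f(z) = 0$ and $|z|\ge\frac{3}{2}$ is at most $M$. *)

(* Defs.v *)
From mathcomp Require Import all_boot all_order all_algebra.
From mathcomp Require Import complex.
From mathcomp Require Import Rstruct.
Set Implicit Arguments.
Unset Strict Implicit.
Unset Printing Implicit Defensive.

Definition C : Type := complex Rdefinitions.R.

(* Main.v *)
Require Import Defs.
From mathcomp Require Import all_boot all_order all_algebra.
From mathcomp Require Import complex.
From mathcomp Require Import Rstruct.
From mathcomp Require Import ring zify.
Import Order.TTheory GRing.Theory Num.Theory.
Local Open Scope ring_scope.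

Definition nsq (p : {poly C}) : C := \sum_(i < size p) `|p`_i| ^+ 2.

Lemma nsq_wide (p : {poly C}) m : (size p <= m)%N ->
  nsq p = \sum_(i < m) `|p`_i| ^+ 2.
Proof.
move=> hm; rewrite /nsq (big_ord_widen m (fun i => `|p`_i| ^+ 2) hm).
rewrite big_mkcond /=; apply: eq_bigr => i _.
by case: ltnP => // hi; rewrite nth_default // normr0 expr0n.
Qed.

Lemma nsq_ge0 p : 0 <= nsq p.
Proof. by apply: sumr_ge0 => i _; rewrite exprn_ge0. Qed.

Lemma size_cX1 (c : C) : (size (c *: 'X - 1 : {poly C})%R <= 2)%N.
Proof.
apply: (leq_trans (size_polyD _ _)); rewrite geq_max size_opp size_poly1 andbT.
by apply: (leq_trans (size_scale_leq _ _)); rewrite size_polyX.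
Qed.

Lemma swap1 (h : {poly C}) (a : C) :
  nsq (h * ('X - a%:P)) = nsq (h * (a^* *: 'X - 1)).
Proof.
have s1 : (size (h * ('X - a%:P))%R <= (size h).+1)%N.
  apply: (leq_trans (size_polyMleq _ _)); rewrite size_XsubC.
  lia.
have s2 : (size (h * (a^* *: 'X - 1))%R <= (size h).+1)%N.
  apply: (leq_trans (size_polyMleq _ _)).
  rewrite -!subn1 (leq_trans (leq_sub2r 1 (leq_add (leqnn (size h)) (size_cX1 a^*)))) ?addn2 ?size_cX1 // subn1.
rewrite (nsq_wide _ _ s1) (nsq_wide _ _ s2).
pose u i := (h * 'X)`_i.
have E : forall i : 'I_(size h).+1,
   `|(h * ('X - a%:P))`_i| ^+ 2 - `|(h * (a^* *: 'X - 1))`_i| ^+ 2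
   = (1 - a * a^*) * (`|u i| ^+ 2 - `|h`_i| ^+ 2).
  move=> i; rewrite mulrBr mulrBr mulr1 -scalerAr !coefB coefZ coefMC /u.
  rewrite !normCK !rmorphB !rmorphM /= conjCK; ring.
apply/eqP; rewrite -subr_eq0 -sumrB (eq_bigr _ (fun i _ => E i)) -mulr_sumr.
rewrite sumrB big_ord_recl big_ord_recr /= /u coefMX /= normr0 expr0n /= add0r.
rewrite (nth_default 0 (leqnn (size h))) normr0 expr0n addr0.
rewrite (eq_bigr (fun i : 'I_(size h) => `|h`_i| ^+ 2)); last first.
  by move=> i _; rewrite coefMX.
by rewrite subrr mulr0.
Qed.

Lemma swapP (t : seq C) (h : {poly C}) :
  nsq (h * \prod_(a <- t) ('X - a%:P)) = nsq (h * \prod_(a <- t) (a^* *: 'X - 1)).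
Proof.
elim: t h => [|a t IH] h; first by rewrite !big_nil.
rewrite !big_cons.
have -> : h * (('X - a%:P) * \prod_(j <- t) ('X - j%:P))
   = (h * \prod_(j <- t) ('X - j%:P)) * ('X - a%:P) by ring.
rewrite swap1.
have -> : (h * \prod_(j <- t) ('X - j%:P)) * (a^* *: 'X - 1)
   = (h * (a^* *: 'X - 1)) * \prod_(j <- t) ('X - j%:P) by ring.
rewrite IH; congr nsq; ring.
Qed.

Lemma lead_le p : `|lead_coef p| ^+ 2 <= nsq p.
Proof.
rewrite /nsq /lead_coef; case E: (size p) => [|d] /=.
  by rewrite nth_default ?E // normr0 expr0n big_ord0.
rewrite big_ord_recr /= lerDr; apply: sumr_ge0 => i _; exact: exprn_ge0.
Qed.

Lemma lead_cX1 (c : C) : c != 0 -> lead_coef (c *: 'X - 1 : {poly C}) = c.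
Proof.
move=> c0; rewrite lead_coefDl ?lead_coefZ ?lead_coefX ?mulr1 //.
by rewrite size_opp size_poly1 size_scale // size_polyX.
Qed.

Lemma landau (p : {poly C}) (s : seq C) :
  uniq s -> (forall z, z \in s -> root p z /\ z != 0) ->
  `|lead_coef p| ^+ 2 * \prod_(a <- s) `|a| ^+ 2 <= nsq p.
Proof.
move=> us hs.
have [q ->] : exists q, p = q * \prod_(z <- s) ('X - z%:P).
  apply: uniq_roots_prod_XsubC; last by rewrite uniq_rootsE.
  by apply/allP => z /hs [].
rewrite swapP lead_coefM lead_coef_prod_XsubC mulr1.
apply: le_trans (lead_le _).
rewrite lead_coefM lead_coef_prod.
have -> : \prod_(a <- s) lead_coef (a^* *: 'X - 1 : {poly C}) = \prod_(a <- s) a^*.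
  by apply: eq_big_seq => a /hs [_ a0]; rewrite lead_cX1 // conjC_eq0.
rewrite normrM exprMn normr_prod -prodrXl.
by rewrite le_eqVlt; apply/orP; left; apply/eqP; congr (_ * _); apply: eq_bigr => a _; rewrite norm_conjC.
Qed.

Definition r : C := 4%:R / 5%:R.

Lemma nz (n : nat) : (n.+1)%:R != 0 :> C.
Proof. by rewrite pnatr_eq0. Qed.

Lemma r_gt0 : 0 < r.
Proof. by rewrite /r divr_gt0 // ltr0n. Qed.

Lemma geo M : \sum_(i < M.+1) (r ^+ 2) ^+ (M - i) <= 25%:R / 9%:R.
Proof.
elim: M => [|M IH].
  rewrite big_ord1 subnn expr0 ler_pdivlMr ?ltr0n // mul1r ler_nat //.
rewrite big_ord_recr /= subnn expr0.
rewrite (eq_bigr (fun i : 'I_M.+1 => r ^+ 2 * (r ^+ 2) ^+ (M - i))); last first.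
  by move=> i _; rewrite subSn ?exprS // -ltnS.
rewrite -mulr_sumr.
have e : r ^+ 2 * (25%:R / 9%:R) + 1 = 25%:R / 9%:R.
  rewrite /r; field; rewrite ?nz //.
rewrite -[X in _ <= X]e lerD2r ler_pM2l ?exprn_gt0 ?r_gt0 //.
Qed.

Lemma coef_le1 (n : nat) (f : {poly C}) :
  (size f <= n.+1)%N ->
  (forall i : nat, (i <= n)%N -> f`_i \in [:: -1; 0; 1]) ->
  forall i, `|f`_i| <= 1.
Proof.
move=> hs hc i; case: (leqP (size f) i) => hi.
  by rewrite nth_default // normr0.
have := hc i; rewrite -ltnS (leq_trans hi hs) => /(_ isT).
by rewrite !inE => /or3P [] /eqP ->; rewrite ?normrN ?normr1 ?normr0 ?ler01.
Qed.

Lemma prod_lb (s : seq C) :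
  (forall z, z \in s -> 3%:R / 2%:R <= `|z|) ->
  (36%:R / 25%:R) ^+ size s <= \prod_(z <- s) `|r * z| ^+ 2.
Proof.
elim: s => [|z s IH] hs; first by rewrite big_nil expr0.
rewrite big_cons /= exprS.
have h32 : 0 <= 3%:R / 2%:R :> C by rewrite divr_ge0 ?ler0n.
apply: ler_pM; rewrite ?exprn_ge0 ?divr_ge0 ?ler0n //.
  rewrite normrM ger0_norm ?(ltW r_gt0) // exprMn expr2.
  have hz := hs z (mem_head _ _).
  have -> : 36%:R / 25%:R = r ^+ 2 * ((3%:R / 2%:R) * (3%:R / 2%:R)) :> C.
    rewrite /r; field; rewrite ?nz //.
  rewrite ler_pM2l ?exprn_gt0 ?r_gt0 //.
  by apply: ler_pM.
by apply: IH => y ys; apply: hs; rewrite inE ys orbT.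
Qed.

Theorem claim2p1 :
  exists M : nat,
  forall (n : nat), (1 <= n)%N ->
  forall f : {poly C},
    f != 0 ->
    (size f <= n.+1)%N ->
    (forall i : nat, (i <= n)%N -> f`_i \in [:: -1; 0; 1]) ->
    forall s : seq C,
      uniq s ->
      (forall z, z \in s -> root f z /\ 3%:R / 2%:R <= `|z|) ->
      (size s <= M)%N.
Proof.
exists 2%N => n _ f f0 hsz hc s us hs.
have c1 := coef_le1 n f hsz hc.
set d := (size f).-1.
have sf : size f = d.+1 by rewrite /d prednK // lt0n size_poly_eq0.
pose F : {poly C} := \poly_(i < size f) (f`_i * r ^+ (d - i)).
have lf : lead_coef f != 0 by rewrite lead_coef_eq0.
have lf1 : `|lead_coef f| = 1.
  have : (d <= n)%N by rewrite -ltnS -sf.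
  move=> /hc; rewrite /lead_coef -/d !inE => /or3P [] /eqP E.
  - by rewrite E normrN normr1.
  - by move: lf; rewrite /lead_coef -/d E eqxx.
  - by rewrite E normr1.
have sF : size F = size f.
  apply: size_poly_eq; rewrite -/d subnn expr0 mulr1; exact: lf.
have lF : lead_coef F = lead_coef f.
  by rewrite /lead_coef sF coef_poly -/d sf ltnSn subnn expr0 mulr1.
have nF : nsq F <= 25%:R / 9%:R.
  apply: le_trans (geo d).
  rewrite /nsq sF sf; apply: ler_sum => i _.
  rewrite coef_poly (_ : (i < size f)%N = true) ?sf ?ltn_ord // normrM exprMn normrX (ger0_norm (ltW r_gt0)).
  have -> : (r ^+ 2) ^+ (d - i) = (r ^+ (d - i)) ^+ 2 by rewrite -!exprM mulnC.
  rewrite -[X in _ <= X]mul1r ler_pM2r ?exprn_gt0 ?r_gt0 //.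
  by rewrite expr_le1 ?normr_ge0 ?c1.
pose s' := map (fun z => r * z) s.
have us' : uniq s' by rewrite map_inj_uniq // => x y; apply: mulfI; rewrite gt_eqF ?r_gt0.
have hs' : forall z, z \in s' -> root F z /\ z != 0.
  move=> z' /mapP [z zs ->]; have [rz hz] := hs z zs; split.
    rewrite /root horner_poly.
    have -> : \sum_(i < size f) f`_i * r ^+ (d - i) * (r * z) ^+ i
        = r ^+ d * f.[z].
      rewrite horner_coef mulr_sumr; apply: eq_bigr => i _.
      have hi : (i <= d)%N by rewrite -ltnS -sf.
      have -> : r ^+ d = r ^+ (d - i) * r ^+ i by rewrite -exprD subnK.
      by rewrite (exprMn _ r z); ring.
    by move/eqP: rz => ->; rewrite mulr0.
  rewrite mulf_neq0 ?(gt_eqF r_gt0) //; apply/eqP => z0; move: hz.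
  have p : 0 < 3%:R / 2%:R :> C by rewrite divr_gt0 ?ltr0n.
  by rewrite z0 normr0 => h; have := lt_le_trans p h; rewrite ltxx.
have L := landau F s' us' hs'.
rewrite lF lf1 expr1n mul1r big_map in L.
have P := prod_lb s (fun z zs => (hs z zs).2).
have H := le_trans P (le_trans L nF).
rewrite leqNgt; apply/negP => h3.
move: H; rewrite -(subnK h3) exprD.
have c1' : 1 <= 36%:R / 25%:R :> C by rewrite ler_pdivlMr ?ltr0n // mul1r ler_nat.
have e : (36%:R / 25%:R) ^+ 3 = 25%:R / 9%:R + 29279%:R / 140625%:R :> C.
  field; rewrite ?nz //.
have g : 25%:R / 9%:R < (36%:R / 25%:R) ^+ 3 :> C.
  by rewrite e ltrDl divr_gt0 ?ltr0n.
move=> H; have := lt_le_trans g (le_trans (ler_peMl _ _) H).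
have c0 : 0 <= 36%:R / 25%:R :> C by rewrite divr_ge0 ?ler0n.
by move=> /(_ (exprn_ge0 _ c0) (exprn_ege1 _ c1')); rewrite ltxx.
Qed.
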